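(* Let $R$ be a ring, $M$ a nonzero left $R$-module, $\Omega$ an infinite set, and $E=\mathrm{End}_R(\bigoplus_{i\in\Omega}M)$ or $E=\mathrm{End}_R(\prod_{i\in\Omega}M)$. If $U\subseteq E$ generates $E$ as a ring, then there exists a positive integer $n$ such that every element of $E$ is represented by a ring word of length at most $n$ in elements of $U$.
   Context: Rings are unital and associative. Ring words: for a ring $S$ and a subset $U\subseteq S$, an element $r\in S$ is represented by a ring word of length $1$ in elements of $U$ if $r\in U\cup\{0,1,-1\}$; recursively, $r$ is represented by a ring word of length $n$ in elements of $U$ if $r=p+q$ or $r=pq$ for some $p,q\in S$ represented by ring words of lengths $m_1$ and $m_2$ respectively in elements of $U$, with $n=m_1+m_2$. $U$ generates $E$ as a ring means every element of $E$ is represented by some ring word (of some length) in elements of $U$. *)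

(* Defs.v *)
From Stdlib Require List.
From mathcomp Require Import all_boot all_algebra.
Set Implicit Arguments. Unset Strict Implicit. Unset Printing Implicit Defensive.
Import GRing.Theory.
Local Open Scope ring_scope.

Definition infinite_type (T : Type) : Prop :=
  forall s : seq T, exists x : T, ~ List.In x s.

Section Words.
Variables (T : Type) (add mul : T -> T -> T) (zero one mone : T).

Inductive ring_word (U : T -> Prop) : nat -> T -> Prop :=
| rw_gen u : U u -> ring_word U 1 u
| rw_zero : ring_word U 1 zero
| rw_one : ring_word U 1 one
| rw_mone : ring_word U 1 mone
| rw_add m1 m2 p q :
    ring_word U m1 p -> ring_word U m2 q -> ring_word U (m1 + m2) (add p q)
| rw_mul m1 m2 p q :
    ring_word U m1 p -> ring_word U m2 q -> ring_word U (m1 + m2) (mul p q).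
End Words.

Section EndRing.
Variables (R : pzRingType) (V : Type) (addV : V -> V -> V) (oppV : V -> V)
  (zeroV : V) (scaleV : R -> V -> V).

Definition is_Rlinear (f : V -> V) : Prop :=
  (forall u v, f (addV u v) = addV (f u) (f v)) /\
  (forall (a : R) u, f (scaleV a u) = scaleV a (f u)).

Definition end_add (f g : V -> V) : V -> V := fun v => addV (f v) (g v).
Definition end_mul (f g : V -> V) : V -> V := fun v => f (g v).
Definition end_zero : V -> V := fun _ => zeroV.
Definition end_one : V -> V := fun v => v.
Definition end_mone : V -> V := fun v => oppV v.

Definition end_word (U : (V -> V) -> Prop) (n : nat) (f : V -> V) : Prop :=
  ring_word end_add end_mul end_zero end_one end_mone U n f.

Definition end_generates (U : (V -> V) -> Prop) : Prop :=
  (forall f, U f -> is_Rlinear f) /\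
  (forall f, is_Rlinear f -> exists n, end_word U n f).

Definition end_bounded_words (U : (V -> V) -> Prop) : Prop :=
  exists n : nat, (0 < n)%N /\
    forall f, is_Rlinear f -> exists m, (m <= n)%N /\ end_word U m f.
End EndRing.

Section Modules.
Variables (R : pzRingType) (M : lmodType R) (Omega : Type).

Definition prod_add (u v : Omega -> M) : Omega -> M := fun i => u i + v i.
Definition prod_opp (u : Omega -> M) : Omega -> M := fun i => - u i.
Definition prod_zero : Omega -> M := fun _ => 0.
Definition prod_scale (a : R) (u : Omega -> M) : Omega -> M := fun i => a *: u i.

Definition fin_supp (u : Omega -> M) : Prop :=
  exists s : seq Omega, forall i, ~ List.In i s -> u i = 0.

Definition dsum := {u : Omega -> M | fin_supp u}.

Lemma fin_supp_add u v : fin_supp u -> fin_supp v -> fin_supp (prod_add u v).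
Proof.
move=> [s Hs] [t Ht]; exists (s ++ t) => i Hi; rewrite /prod_add Hs ?Ht ?addr0 //.
- by move=> H; apply: Hi; apply: List.in_or_app; right.
- by move=> H; apply: Hi; apply: List.in_or_app; left.
Qed.

Lemma fin_supp_opp u : fin_supp u -> fin_supp (prod_opp u).
Proof. by move=> [s Hs]; exists s => i Hi; rewrite /prod_opp Hs ?oppr0. Qed.

Lemma fin_supp_zero : fin_supp prod_zero.
Proof. by exists [::]. Qed.

Lemma fin_supp_scale a u : fin_supp u -> fin_supp (prod_scale a u).
Proof. by move=> [s Hs]; exists s => i Hi; rewrite /prod_scale Hs ?scaler0. Qed.

Definition dsum_add (u v : dsum) : dsum :=
  exist _ (prod_add (proj1_sig u) (proj1_sig v))
    (fin_supp_add (proj2_sig u) (proj2_sig v)).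
Definition dsum_opp (u : dsum) : dsum :=
  exist _ (prod_opp (proj1_sig u)) (fin_supp_opp (proj2_sig u)).
Definition dsum_zero : dsum := exist _ prod_zero fin_supp_zero.
Definition dsum_scale (a : R) (u : dsum) : dsum :=
  exist _ (prod_scale a (proj1_sig u)) (fin_supp_scale a (proj2_sig u)).
End Modules.

Definition prodE_generates (R : pzRingType) (M : lmodType R) (Omega : Type) :=
  @end_generates R (Omega -> M) (@prod_add R M Omega) (@prod_opp R M Omega)
    (@prod_zero R M Omega) (@prod_scale R M Omega).
Definition prodE_bounded (R : pzRingType) (M : lmodType R) (Omega : Type) :=
  @end_bounded_words R (Omega -> M) (@prod_add R M Omega) (@prod_opp R M Omega)
    (@prod_zero R M Omega) (@prod_scale R M Omega).
Definition dsumE_generates (R : pzRingType) (M : lmodType R) (Omega : Type) :=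
  @end_generates R (dsum M Omega) (@dsum_add R M Omega) (@dsum_opp R M Omega)
    (@dsum_zero R M Omega) (@dsum_scale R M Omega).
Definition dsumE_bounded (R : pzRingType) (M : lmodType R) (Omega : Type) :=
  @end_bounded_words R (dsum M Omega) (@dsum_add R M Omega) (@dsum_opp R M Omega)
    (@dsum_zero R M Omega) (@dsum_scale R M Omega).

(* Main.v *)
Require Import Defs.
From mathcomp Require Import all_boot all_algebra.
From mathcomp Require Import boolp classical_sets.
From Stdlib Require Cantor List.
Set Implicit Arguments. Unset Strict Implicit. Unset Printing Implicit Defensive.
Import GRing.Theory.
Local Open Scope ring_scope.

Lemma abstract_bounded (R : pzRingType) (V : Type) (addV : V -> V -> V)
  (oppV : V -> V) (zeroV : V) (scaleV : R -> V -> V) (U : (V -> V) -> Prop)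
  (p i : nat -> V -> V) :
  (forall k, is_Rlinear addV scaleV (p k)) ->
  (forall k, is_Rlinear addV scaleV (i k)) ->
  (forall phi : nat -> V -> V, (forall k, is_Rlinear addV scaleV (phi k)) ->
     exists D, is_Rlinear addV scaleV D /\ forall k v, p k (D (i k v)) = phi k v) ->
  end_generates addV oppV zeroV scaleV U ->
  end_bounded_words addV oppV zeroV scaleV U.
Proof.
move=> pl il Dex [UL Ugen].
apply: contrapT => nb.
have H : forall n, exists f, is_Rlinear addV scaleV f /\
    forall m, (m <= n)%N -> ~ end_word addV oppV zeroV U m f.
  move=> n; apply: contrapT => hn; apply: nb; exists n.+1; split => // f fl.
  apply: contrapT => hf; apply: hn; exists f; split => // m mn wm.
  by apply: hf; exists m; split => //; apply: leqW.
have [c hc] := choice (fun k => Ugen _ (pl k)).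
have [d hd] := choice (fun k => Ugen _ (il k)).
have [phi hphi] := choice (fun k => H (k + c k + d k)%N).
have [D [DL HD]] := Dex phi (fun k => (hphi k).1).
have [N wN] := Ugen D DL.
have e : phi N = end_mul (p N) (end_mul D (i N)).
  by apply: funext => v; rewrite /end_mul HD.
have w : end_word addV oppV zeroV U (c N + (N + d N)) (phi N).
  by rewrite e; apply: rw_mul (hc N) (rw_mul wN (hd N)).
apply: ((hphi N).2 _ _ w).
by rewrite addnA (addnC (c N)).
Qed.

Fixpoint idx (T : Type) (x : T) (s : seq T) : nat :=
  match s with
  | [::] => 0%N
  | y :: s' => if pselect (y = x) then 0%N else (idx x s').+1
  end.

Lemma idx_lt T (x : T) s : List.In x s -> (idx x s < size s)%N.
Proof.
elim: s => //= y s IH hy; destruct (pselect _) as [e0|n] => //.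
case: hy => [e|h]; [by case: n | exact: IH].
Qed.

Lemma idx_inj T (x y : T) s : List.In x s -> List.In y s -> idx x s = idx y s -> x = y.
Proof.
elim: s => //= z s IH hx hy.
destruct (pselect (z = x)) as [<-|nzx]; destruct (pselect (z = y)) as [<-|nzy] => //.
move=> [] e; apply: IH => //.
- by case: hx => // h; case: nzx.
- by case: hy => // h; case: nzy.
Qed.

Definition cpair (k m : nat) : nat := Cantor.to_nat (k, m).

Lemma cpair_inj k m k' m' : cpair k m = cpair k' m' -> k = k' /\ m = m'.
Proof.
move=> e; have := Cantor.cancel_of_to (k, m); rewrite /cpair in e.
by rewrite e Cantor.cancel_of_to => -[-> ->].
Qed.

Lemma ex_g (Omega : Type) : infinite_type Omega ->
  exists g : nat -> Omega -> Omega, forall k l x y, g k x = g l y -> k = l /\ x = y.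
Proof.
move=> inf.
pose P (X : set (nat -> Omega)) := (forall e, X e -> injective e) /\
  (forall e e', X e -> X e' -> forall m m', e m = e' m' -> e = e').
have [A [[Ainj Adis] Amax]] : exists A, P A /\ forall B, (A `<` B)%classic -> ~ P B.
  apply: Zorn_bigcup => F FP Ftot; split.
  - by move=> e [X FX Xe]; exact: (FP X FX).1 _ Xe.
  - move=> e e' [X FX Xe] [Y FY Ye'] m m' h.
    have [XY|YX] := Ftot X Y FX FY.
    + exact: (FP Y FY).2 e e' (XY _ Xe) Ye' m m' h.
    + exact: (FP X FX).2 e e' Xe (YX _ Ye') m m' h.
pose cov x := exists e, A e /\ exists m, e m = x.
have [s Hs] : exists s : seq Omega, forall x, ~ cov x -> List.In x s.
  apply: contrapT => hn.
  have hx : forall s : seq Omega, exists x, ~ List.In x s /\ ~ cov x.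
    move=> s; apply: contrapT => h; apply: hn; exists s => x cx.
    by apply: contrapT => nx; apply: h; exists x.
  have [nx hnx] := choice hx.
  pose hist := fix hist n := if n is n'.+1 then nx (hist n') :: hist n' else [::].
  pose c n := nx (hist n).
  have hin : forall m n, (m < n)%N -> List.In (c m) (hist n).
    move=> m n; elim: n => // n IH; rewrite ltnS leq_eqVlt => /orP [/eqP ->|/IH h].
      by left.
    by right.
  have cinj : injective c.
    move=> m n e; case: (ltngtP m n) => // h.
      by have := hin _ _ h; rewrite e => /(hnx (hist n)).1.
    by have := hin _ _ h; rewrite -e => /(hnx (hist m)).1.
  have ccov : forall n, ~ cov (c n) := fun n => (hnx (hist n)).2.
  apply: (Amax (A `|` [set c])%classic).
  - split; first by move=> x Ax; left.
    move=> h; have Ac := h c (or_intror erefl).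
    by apply: (ccov 0%N); exists c; split => //; exists 0%N.
  - split.
    + by move=> e [Ae|->]; [exact: Ainj|exact: cinj].
    + move=> e e' [Ae|->] [Ae'|->] m m' h.
      * exact: Adis h.
      * by exfalso; apply: (ccov m'); exists e; split => //; exists m.
      * by exfalso; apply: (ccov m); exists e'; split => //; exists m'.
      * by [].
have [e0 Ae0] : exists e0, A e0.
  have [x hx] := inf s.
  have : cov x by apply: contrapT => h; apply: hx; exact: Hs.
  by move=> [e [Ae _]]; exists e.
pose cv (x : Omega) : option ((nat -> Omega) * nat) :=
  match pselect (exists em : (nat -> Omega) * nat, A em.1 /\ em.1 em.2 = x) with
  | left h => Some (sval (cid h)) | right _ => None end.
have cvP : forall x, (exists e m, cv x = Some (e, m) /\ A e /\ e m = x) \/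
    (cv x = None /\ List.In x s).
  move=> x; rewrite /cv; case: pselect => [h|h].
    left; case: (cid h) => [[e m] /= [Ae ex]]; by exists e, m.
  right; split => //; apply: Hs => -[e [Ae [m em]]]; apply: h; by exists (e, m).
pose S := size s.
exists (fun k x => match cv x with Some (e, m) => e (cpair k (m + S)) | None => e0 (cpair k (idx x s)) end).
move=> k l x y.
case: (cvP x) => [[e [m [-> [Ae ex]]]] | [-> xs]];
case: (cvP y) => [[e' [m' [-> [Ae' ey]]]] | [-> ys]] h.
- have ee := Adis _ _ Ae Ae' _ _ h; subst e'.
  have [-> hm] := cpair_inj (Ainj _ Ae _ _ h); split => //.
  by rewrite -ex -ey; congr e; apply/eqP; rewrite -(eqn_add2r S) hm.
- have ee := Adis _ _ Ae Ae0 _ _ h; subst e0.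
  have [_ hm] := cpair_inj (Ainj _ Ae _ _ h).
  by have := idx_lt ys; rewrite -hm ltnNge leq_addl.
- have ee := Adis _ _ Ae0 Ae' _ _ h; subst e0.
  have [_ hm] := cpair_inj (Ainj _ Ae' _ _ h).
  by have := idx_lt xs; rewrite hm ltnNge leq_addl.
- have [-> hm] := cpair_inj (Ainj _ Ae0 _ _ h); split => //.
  exact: idx_inj hm.
Qed.

Section Inst.
Variables (R : pzRingType) (M : lmodType R) (Omega : Type)
  (g : nat -> Omega -> Omega).
Hypothesis ginj : forall k l x y, g k x = g l y -> k = l /\ x = y.

Definition ginv (y : Omega) : option (nat * Omega) :=
  match pselect (exists kx : nat * Omega, g kx.1 kx.2 = y) with
  | left h => Some (sval (cid h)) | right _ => None end.

Lemma ginv_g k x : ginv (g k x) = Some (k, x).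
Proof.
rewrite /ginv; case: pselect => [h|h]; last by exfalso; apply: h; exists (k, x).
by case: (cid h) => [[l y] /= e]; case: (ginj e) => -> ->.
Qed.

Lemma ginv_some y k x : ginv y = Some (k, x) -> g k x = y.
Proof.
rewrite /ginv; case: pselect => // h; case: (cid h) => [[l z] /= e] [<- <-].
exact: e.
Qed.

Definition pP k (v : Omega -> M) : Omega -> M := fun x => v (g k x).
Definition iP k (v : Omega -> M) : Omega -> M := fun y =>
  match ginv y with Some (l, x) => if l == k then v x else 0 | None => 0 end.
Definition DP (phi : nat -> (Omega -> M) -> (Omega -> M)) (v : Omega -> M) :
  Omega -> M := fun y =>
  match ginv y with Some (l, x) => phi l (pP l v) x | None => 0 end.

Lemma iP_add k u v : iP k (prod_add u v) = prod_add (iP k u) (iP k v).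
Proof.
apply: funext => y; rewrite /iP /prod_add.
case: (ginv y) => [[l x]|]; last by rewrite addr0.
by case: eqP => _; rewrite ?addr0.
Qed.

Lemma iP_scale k a u : iP k (prod_scale a u) = prod_scale a (iP k u).
Proof.
apply: funext => y; rewrite /iP /prod_scale.
case: (ginv y) => [[l x]|]; last by rewrite scaler0.
by case: eqP => _; rewrite ?scaler0.
Qed.

Lemma pPiP k v : pP k (iP k v) = v.
Proof. by apply: funext => x; rewrite /pP /iP ginv_g eqxx. Qed.

Definition linP := @is_Rlinear R (Omega -> M) (@prod_add R M Omega) (@prod_scale R M Omega).

Lemma pP_lin k : linP (pP k).
Proof. by split. Qed.

Lemma iP_lin k : linP (iP k).
Proof. split; [exact: iP_add | exact: iP_scale]. Qed.

Lemma DP_lin phi : (forall k, linP (phi k)) -> linP (DP phi).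
Proof.
move=> phil; split => [u v|a u]; apply: funext => y; rewrite /DP /prod_add /prod_scale;
  case: (ginv y) => [[l x]|]; rewrite ?addr0 ?scaler0 //.
- exact: (congr1 (fun f => f x) ((phil l).1 (pP l u) (pP l v))).
- exact: (congr1 (fun f => f x) ((phil l).2 a (pP l u))).
Qed.

Lemma DP_spec phi k v : pP k (DP phi (iP k v)) = phi k v.
Proof. by apply: funext => x; rewrite /pP /DP ginv_g -/(pP k (iP k v)) pPiP. Qed.

Local Notation V := (dsum M Omega).

Lemma dsum_eq (u v : V) : sval u = sval v -> u = v.
Proof.
case: u => u hu; case: v => v hv /= e; subst v; congr exist; exact: Prop_irrelevance.
Qed.

Fixpoint pre k (s : seq Omega) : seq Omega :=
  match s with
  | [::] => [::]
  | y :: s' => match ginv y with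
               | Some (l, x) => if l == k then x :: pre k s' else pre k s'
               | None => pre k s' end
  end.

Lemma pre_in k x s : List.In (g k x) s -> List.In x (pre k s).
Proof.
elim: s => //= y s IH [->|h]; first by rewrite ginv_g eqxx; left.
case: (ginv y) => [[l z]|]; last exact: IH.
by case: eqP => _; [right|]; exact: IH.
Qed.

Lemma fin_pP k u : fin_supp u -> fin_supp (pP k u).
Proof.
move=> [s Hs]; exists (pre k s) => x hx; apply: Hs => h; apply: hx; exact: pre_in.
Qed.

Lemma fin_iP k u : fin_supp u -> fin_supp (iP k u).
Proof.
move=> [s Hs]; exists (List.map (g k) s) => y hy; rewrite /iP.
case e: (ginv y) => [[l x]|] //; case: eqP => // lk; subst l.
apply: Hs => xs; apply: hy; rewrite -(ginv_some e); exact: List.in_map.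
Qed.

Definition pS k (v : V) : V := exist _ (pP k (sval v)) (fin_pP k (svalP v)).
Definition iS k (v : V) : V := exist _ (iP k (sval v)) (fin_iP k (svalP v)).

Definition linS := @is_Rlinear R V (@dsum_add R M Omega) (@dsum_scale R M Omega).

Lemma pS_add k u v : pS k (dsum_add u v) = dsum_add (pS k u) (pS k v).
Proof. exact: dsum_eq. Qed.
Lemma pS_scale k a u : pS k (dsum_scale a u) = dsum_scale a (pS k u).
Proof. exact: dsum_eq. Qed.

Lemma pS_lin k : linS (pS k).
Proof. split; [exact: pS_add | exact: pS_scale]. Qed.

Lemma iS_lin k : linS (iS k).
Proof. split=> *; apply: dsum_eq; [exact: iP_add | exact: iP_scale]. Qed.

Lemma linS0 f : linS f -> f (dsum_zero M Omega) = dsum_zero M Omega.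
Proof.
move=> fl.
have z : dsum_scale 0 (dsum_zero M Omega) = dsum_zero M Omega.
  by apply: dsum_eq; apply: funext => x; rewrite /= /prod_scale scale0r.
rewrite -{1}z fl.2; apply: dsum_eq; apply: funext => x.
by rewrite /= /prod_scale /prod_zero !scale0r.
Qed.

Fixpoint blk (s : seq Omega) : seq nat :=
  match s with
  | [::] => [::]
  | y :: s' => match ginv y with Some (l, _) => l :: blk s' | None => blk s' end
  end.

Lemma blk_in l x s : List.In (g l x) s -> List.In l (blk s).
Proof.
elim: s => //= y s IH [->|h]; first by rewrite ginv_g; left.
case: (ginv y) => [[l' z]|]; [right|]; exact: IH.
Qed.

Section DS.
Variables (phi : nat -> V -> V) (phil : forall k, linS (phi k)).

Definition Dfun (v : V) : Omega -> M := fun y =>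
  match ginv y with Some (l, x) => sval (phi l (pS l v)) x | None => 0 end.

Lemma fin_Dfun v : fin_supp (Dfun v).
Proof.
have [s Hs] := svalP v.
have H : forall K : seq nat, exists t : seq Omega, forall l, List.In l K ->
    forall x, ~ List.In (g l x) t -> sval (phi l (pS l v)) x = 0.
  elim => [|l K [t IH]]; first by exists [::].
  have [sl Hsl] := svalP (phi l (pS l v)).
  exists (List.map (g l) sl ++ t) => l' [<-|hl'] x hx.
    apply: Hsl => h; apply: hx; apply: List.in_or_app; left; exact: List.in_map.
  apply: IH => // h; apply: hx; apply: List.in_or_app; by right.
have [t Ht] := H (blk s).
exists t => y hy; rewrite /Dfun.
case e: (ginv y) => [[l x]|] //.
have gy := ginv_some e; subst y.
case: (pselect (List.In l (blk s))) => hl; first exact: Ht.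
have -> : pS l v = dsum_zero M Omega.
  apply: dsum_eq; apply: funext => x' /=; rewrite /pP /prod_zero.
  apply: Hs => h; apply: hl; exact: blk_in h.
by rewrite linS0.
Qed.

Definition DS (v : V) : V := exist _ (Dfun v) (fin_Dfun v).

Lemma DS_lin : linS DS.
Proof.
split => [u v|a u]; apply: dsum_eq; apply: funext => y;
  rewrite /= /Dfun /prod_add /prod_scale;
  case: (ginv y) => [[l x]|]; rewrite ?addr0 ?scaler0 //.
- by rewrite pS_add (phil l).1.
- by rewrite pS_scale (phil l).2.
Qed.

Lemma DS_spec k v : pS k (DS (iS k v)) = phi k v.
Proof.
apply: dsum_eq; apply: funext => x; rewrite /= /pP /Dfun ginv_g.
have -> : pS k (iS k v) = v by apply: dsum_eq; exact: pPiP.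
by [].
Qed.
End DS.
End Inst.

Theorem theorem5 (R : pzRingType) (M : lmodType R) (Omega : Type)
  (HM : exists m : M, m != 0) (HOmega : infinite_type Omega) :
  (forall U : ((Omega -> M) -> (Omega -> M)) -> Prop,
      prodE_generates U -> prodE_bounded U) /\
  (forall U : ((dsum M Omega) -> (dsum M Omega)) -> Prop,
      dsumE_generates U -> dsumE_bounded U).
Proof.
have [g ginj] := ex_g HOmega.
split => U.
- apply: (abstract_bounded (p := @pP R M Omega g) (i := @iP R M Omega g)).
  + exact: pP_lin.
  + exact: iP_lin.
  + move=> phi phil; exists (@DP R M Omega g phi); split; first exact: DP_lin.
    move=> k v; exact: DP_spec.
- apply: (abstract_bounded (p := @pS R M Omega g ginj) (i := @iS R M Omega g)).
  + exact: pS_lin.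
  + exact: iS_lin.
  + move=> phi phil; exists (@DS R M Omega g ginj phi phil); split; first exact: DS_lin.
    move=> k v; exact: DS_spec.
Qed.
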